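(* Let $t \ge 0$ and consider the three-taxon multispecies coalescent described in the context, with species tree of topology $AB|C$ and internal branch length $t$, and $L$ independent loci. For $XY\in\{AB,AC,BC\}$ let $N_{XY}$ be the number of loci whose gene-tree topology is $XY|Z$ (where $Z$ is the remaining species). Let $\mathbb{P}_L$ be the probability of the failure event of the $R^*$/STAR/MDC method, namely $N_{AB} < \max\{N_{AC},N_{BC}\}$. Then the limit $\alpha_{R^*}(t)=-\lim_{L\to\infty}\frac1L\ln\mathbb{P}_L$ exists and $$\alpha_{R^*}(t) = -\ln\left(2\sqrt{\tfrac13 e^{-t}\left(1-\tfrac23 e^{-t}\right)} + \tfrac13 e^{-t}\right).$$ Moreover, as $t\to0$, $\alpha_{R^*}(t)=\frac34 t^2+O(t^3)$, and as $t\to+\infty$, $\alpha_{R^*}(t) - \frac{t}{2} \to -\frac12\ln\frac43$.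
   Context: Multispecies coalescent, three-taxon case: ultrametric rooted species tree on species $A,B,C$ with topology $AB|C$, equal population sizes, time in units of $N$ generations. Populations $A,B,C$, ancestral population $AB$ existing between divergence times $\tau_{AB}$ and $\tau_{ABC}$, and root population $ABC$ above $\tau_{ABC}$; $t=\tau_{ABC}-\tau_{AB}$. For each locus one lineage is sampled from each of $A,B,C$; backwards in time, each pair of lineages in the same population coalesces independently at rate $1$. Loci are independent. Thus with probability $1-e^{-t}$ the $A$ and $B$ lineages coalesce in population $AB$ (gene tree topology $AB|C$), and with probability $e^{-t}$ they do not, in which case each of the three topologies $AB|C$, $AC|B$, $BC|A$ occurs with probability $1/3$. Gene trees are known exactly. The $R^*$ consensus, STAR and MDC methods all output the most frequent gene-tree topology in this three-taxon setting. *)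

(* Defs.v *)
From mathcomp Require Import all_boot all_order all_algebra.
From mathcomp Require Import all_classical all_reals all_analysis.
Set Implicit Arguments. Unset Strict Implicit. Unset Printing Implicit Defensive.
Import Order.TTheory GRing.Theory Num.Theory.
Local Open Scope ring_scope.

Definition topo := 'I_3.
Definition tAB : topo := @Ordinal 3 0 erefl.
Definition tAC : topo := @Ordinal 3 1 erefl.
Definition tBC : topo := @Ordinal 3 2 erefl.

(* Gene-tree topology distribution at one locus under the three-taxon MSC
   with species tree AB|C and internal branch length t:
   P(AB|C) = (1 - e^{-t}) + e^{-t}/3, P(AC|B) = P(BC|A) = e^{-t}/3. *)
Definition gt_prob (R : realType) (t : R) (g : topo) : R :=
  if g == tAB then (1 - expR (- t)) + expR (- t) / 3 else expR (- t) / 3.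

Definition count_topo (L : nat) (G : {ffun 'I_L -> topo}) (x : topo) : nat :=
  #|[set i | G i == x]|.

Definition rstar_fails (L : nat) (G : {ffun 'I_L -> topo}) : bool :=
  (count_topo G tAB < maxn (count_topo G tAC) (count_topo G tBC))%N.

Definition fail_prob (R : realType) (t : R) (L : nat) : R :=
  \sum_(G : {ffun 'I_L -> topo} | rstar_fails G) \prod_(i < L) gt_prob t (G i).

Definition alpha_rstar (R : realType) (t : R) : R :=
  - ln (2 * Num.sqrt (expR (- t) / 3 * (1 - 2 / 3 * expR (- t))) + expR (- t) / 3).

(* Main.v *)
Require Import Defs.
From mathcomp Require Import all_boot all_order all_algebra.
From mathcomp Require Import all_classical all_reals all_analysis.
From mathcomp Require Import zify ring lra.
Import Order.TTheory GRing.Theory Num.Theory.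
Import numFieldNormedType.Exports.
Local Open Scope classical_set_scope.
Local Open Scope ring_scope.
Set Implicit Arguments. Unset Strict Implicit. Unset Printing Implicit Defensive.

Definition ecode (g : topo) : nat := if g == tAB then 0%N else if g == tAC then 2%N else 1%N.
Definition swapt (g : topo) : topo := if g == tAB then tAC else if g == tAC then tAB else g.
Definition cnt L (G : {ffun 'I_L -> topo}) (x : topo) : nat := (\sum_(i < L) (G i == x))%N.
Definition esum L (G : {ffun 'I_L -> topo}) : nat := (\sum_(i < L) ecode (G i))%N.

Lemma topo_cases (g : topo) : [\/ g = tAB, g = tAC | g = tBC].
Proof.
case: g => [[|[|[|k]]] Hk] //.
- by constructor 1; apply/val_inj.
- by constructor 2; apply/val_inj.
- by constructor 3; apply/val_inj.
Qed.

Lemma count_cnt L (G : {ffun 'I_L -> topo}) x : count_topo G x = cnt G x.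
Proof.
rewrite /count_topo /cnt -sum1_card big_mkcond /=.
by apply: eq_bigr => i _; rewrite inE; case: (G i == x).
Qed.

Lemma esum_cnt L (G : {ffun 'I_L -> topo}) : esum G = (cnt G tBC + 2 * cnt G tAC)%N.
Proof.
rewrite /esum /cnt big_distrr /= -big_split /=.
by apply: eq_bigr => i _; case: (topo_cases (G i)) => ->.
Qed.

Lemma cnt_tot L (G : {ffun 'I_L -> topo}) : (cnt G tAB + cnt G tAC + cnt G tBC)%N = L.
Proof.
rewrite /cnt -!big_split /=.
transitivity (\sum_(i < L) 1)%N; last by rewrite sum1_card card_ord.
by apply: eq_bigr => i _; case: (topo_cases (G i)) => ->.
Qed.

Lemma sum_topo (R : nmodType) (w : topo -> R) : \sum_g w g = w tAB + w tAC + w tBC.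
Proof.
rewrite !big_ord_recl big_ord0 addr0 addrA.
by congr (w _ + w _ + w _); apply/val_inj.
Qed.

Lemma sumW (R : comNzRingType) L (w : topo -> R) :
  \sum_(G : {ffun 'I_L -> topo}) \prod_(i < L) w (G i) = (\sum_g w g) ^+ L.
Proof.
rewrite -(bigA_distr_bigA (fun (i : 'I_L) g => w g)) /=.
by rewrite prodr_const card_ord.
Qed.

Definition Fp (R : realType) (w : topo -> R) : {poly R} := \sum_g w g *: 'X^(ecode g).

Lemma Fpow_coef (R : realType) L (w : topo -> R) m :
  (Fp w ^+ L)`_m = \sum_(G : {ffun 'I_L -> topo} | esum G == m) \prod_(i < L) w (G i).
Proof.
have -> : Fp w ^+ L = \prod_(i < L) Fp w by rewrite prodr_const card_ord.
rewrite /Fp (bigA_distr_bigA (fun (i : 'I_L) g => w g *: 'X^(ecode g))) /=.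
change ((\sum_(G : {ffun 'I_L -> topo}) \prod_(i < L) (w (G i) *: 'X^(ecode (G i))))`_m = \sum_(G : {ffun 'I_L -> topo} | esum G == m) \prod_(i < L) w (G i)).
rewrite coef_sum [RHS]big_mkcond /=; apply: eq_bigr => G _.
have -> : \prod_(i < L) (w (G i) *: 'X^(ecode (G i)))
   = (\prod_(i < L) w (G i)) *: 'X^(esum G).
  rewrite (eq_bigr (fun i => (w (G i))%:P * 'X^(ecode (G i)))); last first.
    by move=> i _; rewrite mul_polyC.
  by rewrite big_split /= prodrXr -rmorph_prod mul_polyC.
rewrite coefZ coefXn eq_sym; case: (esum G == m); by rewrite ?mulr1 ?mulr0.
Qed.

Definition swf L (G : {ffun 'I_L -> topo}) : {ffun 'I_L -> topo} := [ffun i => swapt (G i)].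

Lemma swaptK : involutive swapt.
Proof. by move=> g; case: (topo_cases g) => ->. Qed.

Lemma swf_inj L : injective (@swf L).
Proof.
move=> G H /ffunP E; apply/ffunP => i.
by move: (E i); rewrite !ffunE => /(congr1 swapt); rewrite !swaptK.
Qed.

Lemma esum_swf L (G : {ffun 'I_L -> topo}) : (esum G + esum (swf G) = 2 * L)%N.
Proof.
rewrite /esum -big_split /=.
transitivity (\sum_(i < L) 2)%N; last by rewrite sum_nat_const card_ord mulnC.
by apply: eq_bigr => i _; rewrite ffunE; case: (topo_cases (G i)) => ->.
Qed.

Lemma Fpow_pal (R : realType) L (w : topo -> R) m :
  w tAB = w tAC -> (m <= 2 * L)%N ->
  (Fp w ^+ L)`_m = (Fp w ^+ L)`_(2 * L - m).
Proof.
move=> wsym hm; rewrite !Fpow_coef [RHS](reindex_inj (@swf_inj L)) /=.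
apply: eq_big => G.
  have := esum_swf G; move: (esum G) (esum (swf G)) => a b hab.
  apply/eqP/eqP => ?; lia.
move=> _; apply: eq_bigr => i _; rewrite ffunE.
by case: (topo_cases (G i)) => ->.
Qed.

Lemma Fpow_coef_ge0 (R : realType) L (w : topo -> R) m :
  (forall g, 0 <= w g) -> 0 <= (Fp w ^+ L)`_m.
Proof.
move=> w0; rewrite Fpow_coef; apply: sumr_ge0 => G _; apply: prodr_ge0 => i _; exact: w0.
Qed.

Lemma Fp_coef1 (R : realType) (w : topo -> R) : (Fp w)`_1 = w tBC.
Proof. by rewrite /Fp sum_topo !coefD !coefZ !coefXn /= !mulr0 !add0r mulr1. Qed.

Lemma Fp_coef2 (R : realType) (w : topo -> R) : (Fp w)`_2 = w tAC.
Proof. by rewrite /Fp sum_topo !coefD !coefZ !coefXn /= !mulr0 addr0 add0r mulr1. Qed.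

Lemma esum_le L (G : {ffun 'I_L -> topo}) : (esum G < (2 * L).+1)%N.
Proof. have := esum_swf G; lia. Qed.

Lemma Fpow_sum (R : realType) L (w : topo -> R) :
  \sum_(j < (2 * L).+1) (Fp w ^+ L)`_j = (\sum_g w g) ^+ L.
Proof.
rewrite -(sumW L w).
transitivity (\sum_(j < (2*L).+1) \sum_(G : {ffun 'I_L -> topo})
   (if esum G == j then \prod_(i<L) w (G i) else 0)).
  by apply: eq_bigr => j _; rewrite Fpow_coef big_mkcond.
rewrite exchange_big /=; apply: eq_bigr => G _.
rewrite (bigD1 (Ordinal (esum_le G))) //= eqxx [X in _ + X]big1 ?addr0 // => j hj.
case: ifP => // /eqP E; move: hj; rewrite -val_eqE /= E eqxx //.
Qed.

Lemma cauchy_schwarz (R : realType) N (c : 'I_N -> R) :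
  (0 < N)%N -> (\sum_i c i) ^+ 2 <= N%:R * \sum_i c i ^+ 2.
Proof.
move=> N0; set S := \sum_i c i; set Q := \sum_i c i ^+ 2.
have NR : 0 < N%:R :> R by rewrite ltr0n.
pose a := S / N%:R.
have H : 0 <= \sum_i (c i - a) ^+ 2 by apply: sumr_ge0 => i _; exact: sqr_ge0.
have E : \sum_i (c i - a) ^+ 2 = Q - 2 * a * S + N%:R * a ^+ 2.
  rewrite (eq_bigr (fun i => c i ^+ 2 + (- (2 * a) * c i + a ^+ 2))); last by move=> i _; ring.
  rewrite big_split big_split /= -mulr_sumr sumr_const card_ord -/Q -/S -mulr_natl; ring.
rewrite E /a in H.
have HN : N%:R != 0 :> R by rewrite pnatr_eq0 -lt0n.
have : 0 <= (Q - S ^+ 2 / N%:R) by move: H; congr (0 <= _); field.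
rewrite subr_ge0 => H2.
have -> : S ^+ 2 = N%:R * (S ^+ 2 / N%:R) by field.
by rewrite ler_wpM2l // ltW.
Qed.

Lemma Z_lb (R : realType) n (w : topo -> R) :
  (forall g, 0 <= w g) -> w tAB = w tAC ->
  (\sum_g w g) ^+ (2 * n) / (2 * n).+1%:R <= (Fp w ^+ (2 * n))`_(2 * n).
Proof.
move=> w0 wsym.
have -> : Fp w ^+ (2 * n) = Fp w ^+ n * Fp w ^+ n by rewrite mul2n -addnn exprD.
rewrite coefM.
have E : \sum_(j < (2 * n).+1) (Fp w ^+ n)`_j * (Fp w ^+ n)`_(2 * n - j)
       = \sum_(j < (2 * n).+1) (Fp w ^+ n)`_j ^+ 2.
  apply: eq_bigr => j _; rewrite (Fpow_pal wsym (ltn_ord j)).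
  by rewrite expr2.
rewrite E.
have CS := cauchy_schwarz (fun j : 'I_(2 * n).+1 => (Fp w ^+ n)`_j) (ltn0Sn _).
rewrite /= Fpow_sum -exprM mulnC in CS.
have NR : 0 < (2 * n).+1%:R :> R by rewrite ltr0n.
by rewrite ler_pdivrMr // mulrC.
Qed.

Lemma coefM_ge (R : realType) (p q : {poly R}) i j :
  (j <= i)%N -> (forall k, 0 <= p`_k) -> (forall k, 0 <= q`_k) ->
  p`_j * q`_(i - j) <= (p * q)`_i.
Proof.
move=> hji p0 q0; rewrite coefM (bigD1 (Ordinal (hji : (j < i.+1)%N))) //=.
rewrite lerDl; apply: sumr_ge0 => k _; exact: mulr_ge0.
Qed.

Lemma Fp_ge0 (R : realType) (w : topo -> R) k :
  (forall g, 0 <= w g) -> 0 <= (Fp w)`_k.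
Proof. by move=> w0; rewrite -(expr1 (Fp w)); exact: Fpow_coef_ge0. Qed.

Lemma aux_le (R : realType) (a b c : R) : 0 <= a -> a <= 1 -> 0 <= b -> b <= c -> a * b <= c.
Proof. by move=> *; nra. Qed.

Lemma powdiv_mono (R : realType) (S : R) k L : 0 <= S -> S <= 1 -> (k <= L)%N ->
  S ^+ L / L.+1%:R <= S ^+ k / k.+1%:R.
Proof.
move=> S0 S1 kL; apply: ler_pM; [exact: exprn_ge0|by rewrite invr_ge0|exact: ler_wiXn2l|].
by rewrite lef_pV2 ?posrE ?ltr0n // ler_nat.
Qed.

Lemma coef_lb (R : realType) L (w : topo -> R) :
  (forall g, 0 <= w g) -> w tAB = w tAC -> \sum_g w g <= 1 -> w tBC <= 1 ->
  (0 < L)%N ->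
  w tAC * w tBC * (\sum_g w g) ^+ L / L.+1%:R <= (Fp w ^+ L)`_L.+1.
Proof.
move=> w0 wsym S1 wB1 L0.
set S := \sum_g w g.
have S0 : 0 <= S by apply: sumr_ge0.
have wA0 := w0 tAC; have wB0 := w0 tBC.
have c0 k m : 0 <= (Fp w ^+ m)`_k by exact: Fpow_coef_ge0.
have step m : w tAC * (Fp w ^+ m)`_m <= (Fp w ^+ m.+1)`_m.+2.
  rewrite exprS -Fp_coef2.
  have := @coefM_ge R (Fp w) (Fp w ^+ m) m.+2 2 isT (fun k => Fp_ge0 k w0) (fun k => c0 k m).
  by rewrite subn2.
have step1 m : w tBC * (Fp w ^+ m)`_m <= (Fp w ^+ m.+1)`_m.+1.
  rewrite exprS -Fp_coef1.
  have := @coefM_ge R (Fp w) (Fp w ^+ m) m.+1 1 isT (fun k => Fp_ge0 k w0) (fun k => c0 k m).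
  by rewrite subn1.
have SL0 k : 0 <= S ^+ k / k.+1%:R by apply: mulr_ge0; [exact: exprn_ge0|rewrite invr_ge0].
rewrite -!mulrA.
case: (odd L) (odd_double_half L) => /= HL.
- rewrite -HL; set n := L./2.
  have Z := Z_lb n w0 wsym; rewrite -/S mul2n in Z.
  rewrite add1n; apply: le_trans (step _).
  rewrite ler_wpM2l //.
  apply: aux_le => //; apply: le_trans Z; apply: powdiv_mono => //; lia.
- move: L0; rewrite -HL add0n => L0.
  have [n En] : exists n, L./2 = n.+1 by case: (L./2) L0 => [|n]; [rewrite double0|exists n].
  rewrite En doubleS.
  have Z := Z_lb n w0 wsym; rewrite -/S mul2n in Z.
  apply: le_trans (step _).
  rewrite ler_wpM2l //.
  apply: le_trans (step1 _).
  rewrite ler_wpM2l //.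
  apply: le_trans Z; apply: powdiv_mono => //; lia.
Qed.

Lemma prodW (R : realType) (prob w : topo -> R) (lam : R) (x y : topo) L (G : {ffun 'I_L -> topo}) :
  (forall g, prob g * lam ^+ (g == x) = w g * lam ^+ (g == y)) ->
  \prod_(i < L) prob (G i) * lam ^+ cnt G x = \prod_(i < L) w (G i) * lam ^+ cnt G y.
Proof.
move=> H; rewrite /cnt -!prodrXr -!big_split /=; apply: eq_bigr => i _; exact: H.
Qed.

Lemma lam_mono (R : realType) (lam : R) a b : 1 <= lam -> (a <= b)%N -> lam ^+ a <= lam ^+ b.
Proof.
move=> l1 ab; rewrite -(subnKC ab) exprD -{1}(mulr1 (lam ^+ a)).
apply: ler_wpM2l; [apply: exprn_ge0; exact: le_trans l1|exact: exprn_ege1].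
Qed.

Section Params.
Variable R : realType.
Variable t : R.
Hypothesis t0 : 0 <= t.

Let e := expR (- t).
Let q := e / 3.
Let pA := 1 - 2 / 3 * e.
Let s := Num.sqrt (e / 3 * (1 - 2 / 3 * e)).
Let rho := 2 * s + e / 3.
Let lam := s / q.

Lemma e_gt0 : 0 < e. Proof. exact: expR_gt0. Qed.
Lemma e_le1 : e <= 1. Proof. by rewrite /e expR_le1 oppr_le0. Qed.
Lemma q_gt0 : 0 < q. Proof. by rewrite /q divr_gt0 // e_gt0. Qed.
Lemma pA_ge_q : q <= pA. Proof. have := e_le1; rewrite /q /pA; lra. Qed.
Lemma s_sq : s ^+ 2 = pA * q.
Proof. rewrite /s sqr_sqrtr /pA /q; first by rewrite mulrC. have := e_le1; have := e_gt0; nra. Qed.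
Lemma s_ge0 : 0 <= s. Proof. exact: sqrtr_ge0. Qed.
Lemma q_le_s : q <= s.
Proof. have := s_sq; have := pA_ge_q; have := q_gt0; have := s_ge0; nra. Qed.
Lemma s_gt0 : 0 < s. Proof. have := q_le_s; have := q_gt0; lra. Qed.
Lemma lam_ge1 : 1 <= lam.
Proof. by rewrite /lam ler_pdivlMr ?q_gt0 // mul1r q_le_s. Qed.
Lemma lam_gt0 : 0 < lam. Proof. have := lam_ge1; lra. Qed.
Lemma q_lam : q * lam = s. Proof. rewrite /lam mulrC divfK //; exact: lt0r_neq0 q_gt0. Qed.
Lemma s_lam : s * lam = pA.
Proof.
rewrite /lam mulrA -expr2 s_sq mulfK //; exact: lt0r_neq0 q_gt0.
Qed.
Lemma rho_le1 : rho <= 1.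
Proof.
have := s_sq; have := s_ge0; have := q_gt0; have := pA_ge_q; rewrite /rho -/q.
have : pA + 2 * q = 1 by rewrite /pA /q; field.
nra.
Qed.
Lemma rho_gt0 : 0 < rho.
Proof. have := s_gt0; have := q_gt0; rewrite /rho -/q; lra. Qed.

Lemma prob_AB : gt_prob t tAB = pA. Proof. by rewrite /gt_prob eqxx /pA -/e; field. Qed.
Lemma prob_o g : g != tAB -> gt_prob t g = q. Proof. by rewrite /gt_prob => /negbTE ->. Qed.

Definition w1 (g : topo) : R := if g == tBC then q else s.
Definition w2 (g : topo) : R := if g == tAC then q else s.

Lemma sum_w1 : \sum_g w1 g = rho. Proof. by rewrite sum_topo /w1 /= /rho -/q; ring. Qed.
Lemma sum_w2 : \sum_g w2 g = rho. Proof. by rewrite sum_topo /w2 /= /rho -/q; ring. Qed.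

Lemma rel1 g : gt_prob t g * lam ^+ (g == tAC) = w1 g * lam ^+ (g == tAB).
Proof.
by case: (topo_cases g) => ->; rewrite ?prob_AB ?prob_o // /w1 /= ?expr0 ?expr1 ?mulr1 ?s_lam ?q_lam.
Qed.

Lemma rel2 g : gt_prob t g * lam ^+ (g == tBC) = w2 g * lam ^+ (g == tAB).
Proof.
by case: (topo_cases g) => ->; rewrite ?prob_AB ?prob_o // /w2 /= ?expr0 ?expr1 ?mulr1 ?s_lam ?q_lam.
Qed.

Lemma prob_ge0 g : 0 <= gt_prob t g.
Proof.
case: (topo_cases g) => ->; rewrite ?prob_AB ?prob_o //; last 2 first.
- exact: ltW q_gt0.
- exact: ltW q_gt0.
have := pA_ge_q; have := q_gt0; lra.
Qed.

Lemma fail_ub L : fail_prob t L <= 2 * rho ^+ L.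
Proof.
rewrite /fail_prob.
apply: (@le_trans _ _ (\sum_(G : {ffun 'I_L -> topo})
    (\prod_(i < L) w1 (G i) + \prod_(i < L) w2 (G i)))).
  rewrite [X in _ <= X](bigID (fun G => rstar_fails G)) /=.
  have w10 g : 0 <= w1 g by rewrite /w1; case: ifP => _; [exact: ltW q_gt0|exact: s_ge0].
  have w20 g : 0 <= w2 g by rewrite /w2; case: ifP => _; [exact: ltW q_gt0|exact: s_ge0].
  rewrite -[X in X <= _]addr0; apply: lerD; last first.
    apply: sumr_ge0 => G _; apply: addr_ge0; apply: prodr_ge0 => i _; by [apply: w10|apply: w20].
  apply: ler_sum => G; rewrite /rstar_fails !count_cnt => hf.
  have P0 : 0 <= \prod_(i < L) gt_prob t (G i) by apply: prodr_ge0 => i _; exact: prob_ge0.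
  have W10 : 0 <= \prod_(i < L) w1 (G i) by apply: prodr_ge0 => i _; exact: w10.
  have W20 : 0 <= \prod_(i < L) w2 (G i) by apply: prodr_ge0 => i _; exact: w20.
  have lp k : 0 < lam ^+ k by apply: exprn_gt0; exact: lam_gt0.
  case: (ltnP (cnt G tAB) (cnt G tAC)) => h1.
  - have E := prodW G rel1.
    suff : \prod_(i < L) gt_prob t (G i) <= \prod_(i < L) w1 (G i) by move=> ?; lra.
    rewrite -(ler_pM2r (lp (cnt G tAB))) -E; apply: ler_wpM2l => //.
    by apply: lam_mono; [exact: lam_ge1|exact: ltnW].
  - have h2 : (cnt G tAB < cnt G tBC)%N by move: hf h1; lia.
    have E := prodW G rel2.
    suff : \prod_(i < L) gt_prob t (G i) <= \prod_(i < L) w2 (G i) by move=> ?; lra.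
    rewrite -(ler_pM2r (lp (cnt G tAB))) -E; apply: ler_wpM2l => //.
    by apply: lam_mono; [exact: lam_ge1|exact: ltnW].
rewrite big_split /= !sumW sum_w1 sum_w2; lra.
Qed.

Lemma w1_ge0 g : 0 <= w1 g.
Proof. by rewrite /w1; case: ifP => _; [exact: ltW q_gt0|exact: s_ge0]. Qed.

Lemma fail_lb L : (0 < L)%N -> q ^+ 2 * rho ^+ L / L.+1%:R <= fail_prob t L.
Proof.
move=> L0.
have lamN : lam != 0 by exact: lt0r_neq0 lam_gt0.
have key : forall G : {ffun 'I_L -> topo}, esum G == L.+1 ->
    rstar_fails G /\ \prod_(i < L) gt_prob t (G i) = \prod_(i < L) w1 (G i) / lam.
  move=> G /eqP hG; have := cnt_tot G; rewrite esum_cnt in hG => ht.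
  have hc : cnt G tAC = (cnt G tAB).+1 by lia.
  split; first by rewrite /rstar_fails !count_cnt; lia.
  have E := prodW G rel1; rewrite hc exprS mulrA in E.
  have E2 : \prod_(i < L) gt_prob t (G i) * lam = \prod_(i < L) w1 (G i).
    by apply: (mulIf (expf_neq0 (cnt G tAB) lamN)); exact: E.
  by rewrite -E2; field.
apply: (@le_trans _ _ (\sum_(G : {ffun 'I_L -> topo} | esum G == L.+1)
                        \prod_(i < L) gt_prob t (G i))); last first.
  rewrite /fail_prob [X in X <= _]big_mkcond [X in _ <= X]big_mkcond /=.
  apply: ler_sum => G _; case: ifP => h; first by rewrite (key G h).1.
  case: ifP => _ //; apply: prodr_ge0 => i _; exact: prob_ge0.
rewrite (eq_bigr (fun G : {ffun 'I_L -> topo} => \prod_(i < L) w1 (G i) / lam)); last first.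
  by move=> G h; rewrite (key G h).2.
rewrite -mulr_suml -Fpow_coef.
have S1 : \sum_g w1 g <= 1 by rewrite sum_w1 rho_le1.
have B1 : w1 tBC <= 1 by rewrite /w1 /= /q; have := e_le1; have := e_gt0; lra.
have := coef_lb w1_ge0 (erefl s) S1 B1 L0.
rewrite sum_w1 /w1 /= => H.
have lp := lam_gt0.
rewrite ler_pdivlMr //; apply: le_trans H.
rewrite -q_lam le_eqVlt; apply/orP; left; apply/eqP; rewrite /lam; field.
apply/andP; split; last exact: lt0r_neq0 q_gt0.
by rewrite (_ : 1 + L%:R = L.+1%:R) ?pnatr_eq0 // -addn1 natrD addrC.
Qed.
End Params.
Lemma ln_bound (R : realType) (x M : R) : 0 < x -> 0 < M -> ln x <= ln M + x / M.
Proof.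
move=> x0 M0.
have := ln_sublinear (divr_gt0 x0 M0).
rewrite ln_div ?posrE //; lra.
Qed.

Lemma limit_aux (R : realType) (rho c : R) (P : nat -> R) :
  0 < rho -> 0 < c ->
  (forall n, (0 < n)%N -> c * rho ^+ n / n.+1%:R <= P n /\ P n <= 2 * rho ^+ n) ->
  (fun n : nat => - (n%:R)^-1 * ln (P n)) @ \oo --> - ln rho.
Proof.
move=> r0 c0 HP; apply/cvgrPdist_le => eps eps0.
set M := 4 / eps.
have M0 : 0 < M by rewrite /M divr_gt0.
set K := ln 2 + `|ln c| + `|ln M|.
have K0 : 0 <= K by rewrite /K !addr_ge0 // ln_ge0 // ler1n.
apply: filterS (nbhs_infty_ger (Num.max 1 (2 * K / eps))) => n.
rewrite ge_max => /andP[hn1 hnK].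
have n0 : (0 < n)%N by rewrite -(ltr0n R); lra.
set x := n%:R : R.
have x0 : 0 < x by rewrite /x ltr0n.
have [Hl Hu] := HP n n0.
have cr : 0 < c * rho ^+ n / n.+1%:R by rewrite !mulr_gt0 ?exprn_gt0 ?invr_gt0 ?ltr0n.
have P0 : 0 < P n by exact: lt_le_trans Hl.
have lnU : ln (P n) <= ln 2 + x * ln rho.
  apply: le_trans (_ : ln (2 * rho ^+ n) <= _).
    by rewrite ler_ln ?posrE // mulr_gt0 ?exprn_gt0.
  by rewrite lnM ?posrE ?exprn_gt0 // lnXn // mulr_natl.
have lnL : ln c + x * ln rho - ln (x + 1) <= ln (P n).
  apply: le_trans (_ : ln (c * rho ^+ n / n.+1%:R) <= _); last by rewrite ler_ln ?posrE.
  rewrite ln_div ?posrE ?mulr_gt0 ?exprn_gt0 ?ltr0n // lnM ?posrE ?exprn_gt0 //.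
  by rewrite lnXn // mulr_natl -addn1 natrD.
have x10 : 0 < x + 1 by lra.
have lnx := ln_bound x10 M0.
have eM : (x + 1) / M = (x + 1) * eps / 4 by rewrite /M; field; exact: lt0r_neq0.
rewrite eM in lnx.
have hK : 2 * K <= eps * x.
  by move: hnK; rewrite ler_pdivrMr // => h; rewrite [eps * x]mulrC.
have hc : - `|ln c| <= ln c by have := ler_norm (- ln c); rewrite normrN; lra.
have hM : ln M <= `|ln M| by exact: ler_norm.
set D := x * - ln rho + ln (P n).
have hD : `|D| <= eps * x.
  rewrite ler_norml; apply/andP; split.
  - have hx1 : 1 <= x by exact: hn1.
    have h1 : 0 <= eps * (x - 1) by apply: mulr_ge0; lra.
    have : (x + 1) * eps / 4 <= eps * x / 2.
      rewrite -subr_ge0 (_ : eps * x / 2 - (x + 1) * eps / 4 = eps * (x - 1) / 4).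
        by apply: divr_ge0.
      by field.
    have : 0 <= ln (2:R) by apply: ln_ge0; rewrite ler1n.
    rewrite /D /K in hK *; lra.
  - rewrite /D /K in hK *.
    have : 0 <= ln (2:R) by apply: ln_ge0; rewrite ler1n.
    have := normr_ge0 (ln c); have := normr_ge0 (ln M); lra.
have -> : - ln rho - - x^-1 * ln (P n) = D / x.
  rewrite /D; field; exact: lt0r_neq0.
rewrite normrM normfV (gtr0_norm x0) ler_pdivrMr //.
Qed.
Definition hfun (R : realType) (y : R) : R :=
  2 * Num.sqrt ((1 - 2 / 3 * (y * y)) / 3) + y / 3.

Lemma p3_eq (R : realType) (t : R) :
  alpha_rstar t - t / 2 = - ln (hfun (expR (- (t / 2)))).
Proof.
set y := expR (- (t / 2)).
have y0 : 0 < y by exact: expR_gt0.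
have ey : expR (- t) = y * y by rewrite /y -expRD; congr expR; field.
have sq : Num.sqrt (expR (- t) / 3 * (1 - 2 / 3 * expR (- t)))
        = y * Num.sqrt ((1 - 2 / 3 * (y * y)) / 3).
  rewrite ey (_ : y * y / 3 * (1 - 2 / 3 * (y * y)) = y ^+ 2 * ((1 - 2 / 3 * (y * y)) / 3)).
    by rewrite sqrtrM ?sqr_ge0 // sqrtr_sqr gtr0_norm.
  by rewrite expr2; field.
have h0 : 0 < hfun y.
  rewrite /hfun; apply: ltr_wpDl; first by apply: mulr_ge0 => //; exact: sqrtr_ge0.
  by apply: divr_gt0.
rewrite /alpha_rstar sq ey.
have -> : 2 * (y * Num.sqrt ((1 - 2 / 3 * (y * y)) / 3)) + y * y / 3 = y * hfun y.
  by rewrite /hfun; ring.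
rewrite lnM ?posrE // /y expRK; lra.
Qed.

Lemma y_cvg (R : realType) : (fun t : R => expR (- (t / 2))) @ +oo --> (0 : R).
Proof.
apply/cvgrPdist_le => eps eps0.
have := @nbhs_pinfty_ge R (- 2 * ln eps) (num_real _).
apply: filterS => t ht.
rewrite sub0r normrN gtr0_norm ?expR_gt0 //.
rewrite -[X in _ <= X](@lnK _ eps) ?posrE // ler_expR; lra.
Qed.

Lemma hfun_cont (R : realType) : {for (0:R), continuous (@hfun R)}.
Proof.
rewrite /hfun.
apply: cvgD; last first.
  apply: cvgMl; exact: cvg_id.
apply: cvgMr.
apply: (continuous_cvg _ (@sqrt_continuous R _)).
apply: cvgMl.
apply: cvgB; first exact: cvg_cst.
apply: cvgMr.
apply: cvgM; exact: cvg_id.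
Qed.

Lemma hfun0 (R : realType) : hfun (0:R) = 2 * Num.sqrt (1 / 3).
Proof. by rewrite /hfun mulr0 mulr0 subr0 mul0r addr0. Qed.

Lemma part3 (R : realType) :
  (fun t : R => alpha_rstar t - t / 2) @ +oo --> - (1 / 2) * ln (4 / 3 : R).
Proof.
have -> : (fun t : R => alpha_rstar t - t / 2) = (fun t => - ln (hfun (expR (- (t / 2))))).
  by apply: funext => t; exact: p3_eq.
have hp : 0 < hfun (0:R) by rewrite hfun0 mulr_gt0 // sqrtr_gt0.
have -> : - (1 / 2) * ln (4 / 3 : R) = - ln (hfun 0).
  rewrite hfun0.
  have -> : (4 / 3 : R) = (2 * Num.sqrt (1 / 3)) ^+ 2.
    by rewrite exprMn sqr_sqrtr; [field|].
  rewrite lnXn; last by rewrite mulr_gt0 // sqrtr_gt0.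
  by rewrite -mulr_natl; field.
have C : {for (0:R), continuous (fun x => - ln (hfun x))}.
  apply: cvgN.
  exact: (continuous_cvg _ (continuous_ln hp) (@hfun_cont R)).
have K := @continuous_cvg _ _ _ _ (@proper_pinfty_nbhs R) (fun t : R => expR (- (t / 2))) _ 0 C (@y_cvg R).
exact: K.
Qed.

Lemma taylor_arith (R : realType) (t u D a : R) :
  0 <= t -> t <= 1 / 4 -> 0 <= u -> u <= t -> t - u <= t ^+ 2 ->
  0 <= D -> D <= 3 / 2 * u ^+ 2 -> D - 3 / 4 * u ^+ 2 = D * (3 / 4 * D - u / 2) ->
  D <= a -> a <= D + 2 * D ^+ 2 ->
  `|a - 3 / 4 * t ^+ 2| <= 10 * t ^+ 3.
Proof.
move=> t0 t1 u0 ut tu D0 Du Did Da aD.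
have u2 : u ^+ 2 <= t ^+ 2 by rewrite ler_sqr ?nnegrE.
have Dt : D <= 3 / 2 * t ^+ 2 by lra.
have h1 : `|D - 3 / 4 * u ^+ 2| <= D * (3 / 4 * D + u / 2).
  rewrite Did normrM ger0_norm //; apply: ler_wpM2l => //.
  apply: le_trans (ler_normD _ _) _; rewrite normrN !ger0_norm; lra.
have h2 : D * (3 / 4 * D + u / 2) <= 3 / 2 * t ^+ 2 * (3 / 4 * (3 / 2 * t ^+ 2) + t / 2).
  apply: ler_pM => //; first by apply: addr_ge0; lra.
  lra.
have t3 : t ^+ 4 <= t ^+ 3 / 4.
  have -> : t ^+ 4 = t ^+ 3 * t by rewrite exprSr.
  rewrite [_ / 4]mulrC -[X in _ <= X]mulrC; apply: ler_wpM2l; [exact: exprn_ge0|lra].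
have h3 : 3 / 2 * t ^+ 2 * (3 / 4 * (3 / 2 * t ^+ 2) + t / 2) <= 2 * t ^+ 3.
  have -> : 3 / 2 * t ^+ 2 * (3 / 4 * (3 / 2 * t ^+ 2) + t / 2)
          = 27 / 16 * t ^+ 4 + 3 / 4 * t ^+ 3.
    by rewrite !exprS expr0; field.
  have := exprn_ge0 3 t0; lra.
have h4 : `|u ^+ 2 - t ^+ 2| <= 2 * t ^+ 3.
  rewrite distrC ger0_norm ?subr_ge0 //.
  have -> : t ^+ 2 - u ^+ 2 = (t - u) * (t + u) by rewrite !expr2; ring.
  apply: le_trans (_ : t ^+ 2 * (2 * t) <= _); last by rewrite exprS mulrC -mulrA mulrCA.
  apply: ler_pM => //; lra.
have h5 : 2 * D ^+ 2 <= 2 * t ^+ 3.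
  have : D ^+ 2 <= (3 / 2 * t ^+ 2) ^+ 2 by rewrite ler_sqr ?nnegrE //; lra.
  have -> : (3 / 2 * t ^+ 2) ^+ 2 = 9 / 4 * t ^+ 4 by rewrite exprMn -exprM; field.
  have := exprn_ge0 3 t0; lra.
have E : a - 3 / 4 * t ^+ 2
       = (a - D) + (D - 3 / 4 * u ^+ 2) + 3 / 4 * (u ^+ 2 - t ^+ 2) by ring.
rewrite E; apply: le_trans (ler_normD _ _) _.
apply: le_trans (lerD (ler_normD _ _) (lexx _)) _.
rewrite normrM (ger0_norm (_ : 0 <= 3 / 4 :> R)) //.
rewrite (ger0_norm (_ : 0 <= a - D)); last lra.
have := exprn_ge0 3 t0; lra.
Qed.

Lemma part2 (R : realType) :
  exists C delta : R, 0 < delta /\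
        forall t : R, 0 <= t -> t < delta ->
          `|alpha_rstar t - 3 / 4 * t ^+ 2| <= C * t ^+ 3.
Proof.
exists 10, (1 / 4); split => // t t0 td.
set e := expR (- t).
set s := Num.sqrt (e / 3 * (1 - 2 / 3 * e)).
set u := 1 - e.
have e0 : 0 < e by exact: expR_gt0.
have e1 : e <= 1 by rewrite /e expR_le1 oppr_le0.
have eL : 1 - t <= e by have := expR_ge1Dx (- t); rewrite /e; lra.
have eU : e * (1 + t) <= 1.
  have := expRxMexpNx_1 t; have := expR_ge1Dx t; rewrite -/e => h1 h2.
  have h3 : e * (1 + t) <= e * expR t by apply: ler_wpM2l => //; exact: ltW.
  lra.
have hu2 : t - u <= t ^+ 2.
  rewrite /u; have : 0 <= t ^+ 3 by exact: exprn_ge0.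
  have -> : t ^+ 3 = t * t ^+ 2 by rewrite exprS.
  rewrite expr2 in eU *; nra.
have s0 : 0 <= s by exact: sqrtr_ge0.
have ss : s ^+ 2 = e / 3 * (1 - 2 / 3 * e) by rewrite sqr_sqrtr //; nra.
set D := (1 - 2 / 3 * e) + e / 3 - 2 * s.
set K := (1 - 2 / 3 * e) + e / 3 + 2 * s.
have DK : D * K = u ^+ 2 by rewrite /D /K /u; rewrite expr2 in ss *; nra.
have K23 : 2 / 3 <= K by rewrite /K; lra.
have D0 : 0 <= D.
  rewrite /D; have : (2 * s) ^+ 2 <= ((1 - 2 / 3 * e) + e / 3) ^+ 2.
    rewrite exprMn ss; have : 0 <= (1 - e) ^+ 2 by exact: sqr_ge0.
    rewrite !expr2; nra.
  rewrite ler_sqr ?nnegrE; [lra|nra|lra].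
have Du : D <= 3 / 2 * u ^+ 2 by rewrite -DK; nra.
have Did : D - 3 / 4 * u ^+ 2 = D * (3 / 4 * D - u / 2).
  rewrite -DK (_ : K = 4 / 3 + 2 / 3 * u - D); last by rewrite /K /D /u; field.
  by field.
have u0 : 0 <= u by rewrite /u; lra.
have ut : u <= t by rewrite /u; lra.
have hD12 : D <= 1 / 2.
  have : u ^+ 2 <= t ^+ 2 by rewrite ler_sqr ?nnegrE.
  have : t ^+ 2 <= 1 / 16 by rewrite expr2; nra.
  lra.
have Ar : alpha_rstar t = - ln (1 - D) by rewrite /alpha_rstar -/e -/s /D; congr (- ln _); field.
have Da : D <= alpha_rstar t.
  rewrite Ar lerNr; have := le_ln1Dx (_ : -1 < - D); rewrite addrC; apply; lra.
have aD : alpha_rstar t <= D + 2 * D ^+ 2.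
  rewrite Ar.
  have hDD : 0 < 1 - D by lra.
  have hlt : -1 < D / (1 - D).
    apply: lt_le_trans (_ : -1 < 0) (divr_ge0 D0 (ltW hDD)); lra.
  have H := le_ln1Dx hlt.
  rewrite (_ : 1 + D / (1 - D) = (1 - D)^-1) in H; last first.
    by field; rewrite subr_eq0; apply/eqP; lra.
  rewrite lnV ?posrE // in H.
  apply: le_trans H _.
  rewrite ler_pdivrMr // expr2; nra.
apply: (taylor_arith t0 (ltW td) u0 ut hu2 D0 Du Did Da aD).
Qed.

Lemma part1 (R : realType) (t : R) : 0 <= t ->
  (fun L : nat => - (L%:R)^-1 * ln (fail_prob t L)) @ \oo --> alpha_rstar t.
Proof.
move=> t0; rewrite /alpha_rstar.
apply: (limit_aux (rho_gt0 t0) (exprn_gt0 2 (q_gt0 t))).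
move=> n n0; split; [exact: fail_lb | exact: fail_ub].
Qed.

Theorem mainTheorem2 (R : realType) :
  (forall t : R, 0 <= t ->
     (fun L : nat => - (L%:R)^-1 * ln (fail_prob t L)) @ \oo --> alpha_rstar t)
  /\ (exists C delta : R, 0 < delta /\
        forall t : R, 0 <= t -> t < delta ->
          `|alpha_rstar t - 3 / 4 * t ^+ 2| <= C * t ^+ 3)
  /\ ((fun t : R => alpha_rstar t - t / 2) @ +oo --> - (1 / 2) * ln (4 / 3 : R)).
Proof.
split; first exact: part1.
split; first exact: part2.
exact: part3.
Qed.
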